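(* Let $\langle X,\tau\rangle$ be a Hausdorff space. Suppose there are a dense subset $Q\subseteq X$ and an asymmetric binary relation $R$ on $X$ such that $\langle X,\tau\rangle$ is $R$-bidirected along $Q$. Then $\langle X,\tau\rangle$ is not a continuous open image of the Sorgenfrey line.
   Context: The Sorgenfrey line is $\mathbb R$ with topology generated by $\{[a,b)\}$; ''continuous open image'' means image under a continuous open surjection. $R$ is asymmetric if $xRy$ implies $\neg yRx$. For $y\in X$: $y{\downarrow}_R=\{z:zRy\}$, $y{\uparrow}_R=\{z:yRz\}$. For $Q$ dense and $x\in X$: an open neighborhood $U$ of $x$ is $R$-right along $Q$ if $xRy$ for all $y\in(U\setminus\{x\})\cap Q$; $x$ looks to the $R$-right along $Q$ if some open neighborhood of $x$ is $R$-right along $Q$ and for every open neighborhood $U$ of $x$ there is $y\in(U\setminus\{x\})\cap Q$ such that $y{\downarrow}_R$ is a neighborhood of $x$. Symmetrically, $U$ is $R$-left along $Q$ if $yRx$ for all $y\in(U\setminus\{x\})\cap Q$; $x$ looks to the $R$-left along $Q$ if some open neighborhood of $x$ is $R$-left along $Q$ and for every open neighborhood $U$ of $x$ there is $y\in(U\setminus\{x\})\cap Q$ with $y{\uparrow}_R$ a neighborhood of $x$. $\langle X,\tau\rangle$ is $R$-bidirected along $Q$ if there are dense sets $A_l,A_r$ with $X=A_l\cup A_r$, $A_l\cap A_r=\emptyset$, every $x\in A_r$ looks to the $R$-right along $Q$ and every $x\in A_l$ looks to the $R$-left along $Q$. *)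

(* Defs.v *)
From HB Require Import structures.
From mathcomp Require Import all_boot all_order all_algebra.
From mathcomp Require Import all_classical all_reals all_analysis.
Set Implicit Arguments. Unset Strict Implicit. Unset Printing Implicit Defensive.
Import Order.TTheory GRing.Theory Num.Theory.
Local Open Scope classical_set_scope.
Local Open Scope ring_scope.

Definition asymmetric_rel (X : Type) (R : X -> X -> Prop) :=
  forall x y, R x y -> ~ R y x.

Definition down_set (X : Type) (R : X -> X -> Prop) (y : X) : set X :=
  [set z | R z y].
Definition up_set (X : Type) (R : X -> X -> Prop) (y : X) : set X :=
  [set z | R y z].

Definition R_right_along (X : topologicalType) (R : X -> X -> Prop)
  (Q : set X) (x : X) (U : set X) :=
  forall y, U y -> y <> x -> Q y -> R x y.

Definition R_left_along (X : topologicalType) (R : X -> X -> Prop)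
  (Q : set X) (x : X) (U : set X) :=
  forall y, U y -> y <> x -> Q y -> R y x.

Definition looks_right (X : topologicalType) (R : X -> X -> Prop)
  (Q : set X) (x : X) :=
  (exists U : set X, [/\ open U, U x & R_right_along R Q x U]) /\
  (forall U : set X, open U -> U x ->
     exists y, [/\ U y, y <> x, Q y & nbhs x (down_set R y)]).

Definition looks_left (X : topologicalType) (R : X -> X -> Prop)
  (Q : set X) (x : X) :=
  (exists U : set X, [/\ open U, U x & R_left_along R Q x U]) /\
  (forall U : set X, open U -> U x ->
     exists y, [/\ U y, y <> x, Q y & nbhs x (up_set R y)]).

Definition bidirected (X : topologicalType) (R : X -> X -> Prop) (Q : set X) :=
  exists Al Ar : set X,
    [/\ dense Al, dense Ar, Al `|` Ar = setT, Al `&` Ar = set0 &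
        ((forall x, Ar x -> looks_right R Q x) /\
         (forall x, Al x -> looks_left R Q x))].

(* Open sets of the Sorgenfrey line on a real type K: the topology generated
   by the half-open intervals [a,b), i.e. unions of such intervals. *)
Definition sorgenfrey_open (K : realType) (A : set K) :=
  forall x, A x -> exists b : K, x < b /\ [set y | x <= y < b] `<=` A.

Definition sorgenfrey_cont_open_surj (K : realType) (X : topologicalType)
  (f : K -> X) :=
  [/\ (forall V : set X, open V -> sorgenfrey_open (f @^-1` V)),
      (forall U : set K, sorgenfrey_open U -> open (f @` U)) &
      (forall y : X, exists x : K, f x = y)].

(* Main.v *)
Require Import Defs.
From mathcomp Require Import all_boot all_order all_algebra.
From mathcomp Require Import all_classical all_reals all_analysis.
From mathcomp Require Import lra.
Import Order.TTheory GRing.Theory Num.Theory.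
Import numFieldNormedType.Exports.
Local Open Scope classical_set_scope.
Local Open Scope ring_scope.
Set Implicit Arguments. Unset Strict Implicit.

Lemma sorg_halfopen (K : realType) (a b : K) :
  sorgenfrey_open [set y | a <= y < b].
Proof.
move=> x /andP[ax xb]; exists b; split => // y /andP[xy yb].
by apply/andP; split => //; exact: le_trans ax xy.
Qed.

Lemma sorg_openI (K : realType) (a b : K) :
  sorgenfrey_open [set y | a < y < b].
Proof.
move=> x /andP[ax xb]; exists b; split => // y /andP[xy yb].
by apply/andP; split => //; exact: lt_le_trans ax xy.
Qed.

Lemma pre_nbhs (K : realType) (X : topologicalType) (f : K -> X) :
  (forall V : set X, open V -> sorgenfrey_open (f @^-1` V)) ->
  forall t N, nbhs (f t) N -> exists c, t < c /\ forall p, t <= p < c -> N (f p).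
Proof.
move=> hc t N; rewrite nbhsE => -[B [oB Bft] BN].
have [c [tc hcB]] := hc B oB t Bft.
by exists c; split => // p hp; apply: BN; exact: hcB.
Qed.

Lemma pre_dense (K : realType) (X : topologicalType) (f : K -> X) :
  (forall U : set K, sorgenfrey_open U -> open (f @` U)) ->
  forall A : set X, dense A -> forall a b : K, a < b ->
  exists t, a < t < b /\ A (f t).
Proof.
move=> ho A dA a b ab.
have o := ho _ (@sorg_openI K a b).
have ne : (f @` [set y | a < y < b]) !=set0.
  exists (f ((a + b) / 2)); exists ((a + b) / 2) => //.
  by apply/andP; split; lra.
have [x [[t ht <-] Ax]] := dA _ ne o.
by exists t.
Qed.

Lemma caseL (K : realType) (X : topologicalType) (Q : set X) (R : X -> X -> Prop)
  (f : K -> X) (Ar : set X) (d a b : K) :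
  (forall V : set X, open V -> sorgenfrey_open (f @^-1` V)) ->
  (forall U : set K, sorgenfrey_open U -> open (f @` U)) ->
  asymmetric_rel R -> dense Ar -> (forall x, Ar x -> looks_right R Q x) ->
  b - a <= d -> a < b ->
  (forall u v, a <= u -> u < v -> v <= b -> exists t, u < t < v /\
     forall p, t <= p < t + d -> Q (f p) -> f p <> f t -> R (f p) (f t)) ->
  False.
Proof.
move=> hcont hopen asym dAr hR hd ab hM.
have [s [/andP[aS sb] Ars]] := pre_dense hopen dAr ab.
have [_ hC] := hR _ Ars.
have oV := hopen _ (@sorg_halfopen K s b).
have Vs : (f @` [set y | s <= y < b]) (f s).
  by exists s => //; apply/andP; split.
have [y [[r /andP[sr rb] <-] ne Qy nb]] := hC _ oV Vs.
have sr' : s < r.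
  rewrite lt_neqAle sr andbT; apply/eqP => ers; apply: ne; by rewrite ers.
have [c [sc hc]] := pre_nbhs hcont nb.
have h1 : s < Num.min c r by rewrite lt_min sc sr'.
have h2 : Num.min c r <= b by rewrite ge_min (ltW rb) orbT.
have [t [/andP[st tv] Mt]] := hM s (Num.min c r) (ltW aS) h1 h2.
move: tv; rewrite lt_min => /andP[tc tr].
have Rty : R (f t) (f r) by apply: hc; rewrite (ltW st) tc.
have [e|ne'] := pselect (f r = f t).
  by rewrite e in Rty; exact: (asym _ _ Rty Rty).
have Rrt : R (f r) (f t).
  apply: Mt => //; apply/andP; split; [exact: ltW | lra].
exact: (asym _ _ Rty Rrt).
Qed.

Lemma caseR (K : realType) (X : topologicalType) (Q : set X) (R : X -> X -> Prop)
  (f : K -> X) (Al : set X) (d a b : K) :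
  (forall V : set X, open V -> sorgenfrey_open (f @^-1` V)) ->
  (forall U : set K, sorgenfrey_open U -> open (f @` U)) ->
  asymmetric_rel R -> dense Al -> (forall x, Al x -> looks_left R Q x) ->
  b - a <= d -> a < b ->
  (forall u v, a <= u -> u < v -> v <= b -> exists t, u < t < v /\
     forall p, t <= p < t + d -> Q (f p) -> f p <> f t -> R (f t) (f p)) ->
  False.
Proof.
move=> hcont hopen asym dAl hL hd ab hM.
have [s [/andP[aS sb] Als]] := pre_dense hopen dAl ab.
have [_ hC] := hL _ Als.
have oV := hopen _ (@sorg_halfopen K s b).
have Vs : (f @` [set y | s <= y < b]) (f s).
  by exists s => //; apply/andP; split.
have [y [[r /andP[sr rb] <-] ne Qy nb]] := hC _ oV Vs.
have sr' : s < r.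
  rewrite lt_neqAle sr andbT; apply/eqP => ers; apply: ne; by rewrite ers.
have [c [sc hc]] := pre_nbhs hcont nb.
have h1 : s < Num.min c r by rewrite lt_min sc sr'.
have h2 : Num.min c r <= b by rewrite ge_min (ltW rb) orbT.
have [t [/andP[st tv] Mt]] := hM s (Num.min c r) (ltW aS) h1 h2.
move: tv; rewrite lt_min => /andP[tc tr].
have Rty : R (f r) (f t) by apply: hc; rewrite (ltW st) tc.
have [e|ne'] := pselect (f r = f t).
  by rewrite e in Rty; exact: (asym _ _ Rty Rty).
have Rrt : R (f t) (f r).
  apply: Mt => //; apply/andP; split; [exact: ltW | lra].
exact: (asym _ _ Rty Rrt).
Qed.


Lemma closure_itv (K : realType) (A : set K) (x0 e : K) : 0 < e ->
  ball x0 e `<=` closure A -> forall u v, x0 - e / 2 <= u -> u < v ->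
  v <= x0 + e / 2 -> exists t, u < t < v /\ A t.
Proof.
move=> e0 hb u v hu uv hv.
set w := (u + v) / 2.
have cw : closure A w.
  apply: hb; rewrite -ball_normE /ball_ /= ltr_distlC.
  apply/andP; split; rewrite /w; lra.
have nb : nbhs w [set y | u < y < v].
  apply/nbhs_ballP; exists ((v - u) / 2); first by rewrite /=; lra.
  move=> y; rewrite -ball_normE /ball_ /= ltr_distlC => /andP[h1 h2].
  apply/andP; split; rewrite /w in h1 h2; lra.
have [t [At ht]] := cw _ nb.
by exists t.
Qed.

Definition Mset (K : realType) (X : topologicalType) (Q : set X)
  (R : X -> X -> Prop) (f : K -> X) (d : K) : set K :=
  [set t | forall p, t <= p < t + d -> Q (f p) -> f p <> f t -> R (f p) (f t)].
Definition mset (K : realType) (X : topologicalType) (Q : set X)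
  (R : X -> X -> Prop) (f : K -> X) (d : K) : set K :=
  [set t | forall p, t <= p < t + d -> Q (f p) -> f p <> f t -> R (f t) (f p)].

Unset Implicit Arguments.

Theorem mainTheorem11 (K : realType) (X : topologicalType) (Q : set X)
  (R : X -> X -> Prop) :
  hausdorff_space X -> dense Q -> asymmetric_rel R -> bidirected R Q ->
  ~ (exists f : K -> X, sorgenfrey_cont_open_surj f).
Proof.
move=> _ _ asym [Al [Ar [dAl dAr hU _ [hR hL]]]] [f [hcont hopen hsurj]].
pose d (n : nat) : K := n.+1%:R^-1.
have cover : forall t, exists n, Mset Q R f (d n) t \/ mset Q R f (d n) t.
  move=> t; have : (Al `|` Ar) (f t) by rewrite hU.
  case=> [Alt|Art].
    have [[W [oW Wft hW]] _] := hL _ Alt.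
    have [b [tb hb]] := hcont W oW t Wft.
    have [k hk] := ltr_add_invr tb.
    exists k; left => p /andP[tp pk] Qp ne; apply: hW => //; apply: hb.
    by rewrite /= tp /=; apply: lt_trans pk hk.
  have [[W [oW Wft hW]] _] := hR _ Art.
  have [b [tb hb]] := hcont W oW t Wft.
  have [k hk] := ltr_add_invr tb.
  exists k; right => p /andP[tp pk] Qp ne; apply: hW => //; apply: hb.
  by rewrite /= tp /=; apply: lt_trans pk hk.
pose F (n : nat) : set K := ~` closure (Mset Q R f (d n) `|` mset Q R f (d n)).
have [i Fi] : exists i, ~ (open (F i) /\ dense (F i)).
  apply: contrapT => hne.
  have H : forall i, open (F i) /\ dense (F i).
    by move=> i; apply: contrapT => h; apply: hne; exists i.
  have := Baire H; move=> /(_ setT).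
  case; [by exists 0 | exact: openT |] => x [_ hx].
  have [n hn] := cover x.
  by apply: (hx n I); apply: subset_closure.
have [Ow [nOw oOw hOw]] : exists Ow : set K, [/\ Ow !=set0, open Ow &
    Ow `<=` closure (Mset Q R f (d i) `|` mset Q R f (d i))].
  apply: contrapT => hne; apply: Fi; split; first by rewrite /F; apply: closed_openC; exact: closed_closure.
  move=> Ow nOw oO; apply: contrapT => h; apply: hne; exists Ow; split => //.
  move=> z Oz; apply: contrapT => cz; apply: h; by exists z.
have [x0 Owx0] := nOw.
have /nbhs_ballP[e e0 be] : nbhs x0 Ow by apply: open_nbhs_nbhs.
have {}e0 : 0 < e := e0.
have d0 : 0 < d i by rewrite /d invr_gt0 ltr0n.
pose rho := Num.min (e / 2) (d i / 2).
have r1 : rho <= e / 2 by rewrite /rho ge_min lexx.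
have r2 : rho <= d i / 2 by rewrite /rho ge_min lexx orbT.
have r0 : 0 < rho by rewrite /rho lt_min; apply/andP; split; lra.
have hcl := closure_itv e0 (subset_trans be hOw).
have [hM|hnM] := pselect (forall u v, x0 - rho <= u -> u < v -> v <= x0 + rho ->
   exists t, u < t < v /\ Mset Q R f (d i) t).
  apply: (caseL (d := d i) (a := x0 - rho) (b := x0 + rho) hcont hopen asym dAr hR)
    => //; [lra | lra].
move/existsNP: hnM => [u0 /existsNP [v0 /not_implyP [hu0 /not_implyP [uv0
   /not_implyP [hv0 hn0]]]]].
apply: (caseR (d := d i) (a := u0) (b := v0) hcont hopen asym dAl hL) => //; first lra.
move=> u v hu uv hv.
have [t [/andP[ut tv] [Mt|mt]]] := hcl u v ltac:(lra) uv ltac:(lra).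
  exfalso; apply: hn0; exists t; split => //; apply/andP; split; lra.
by exists t; split => //; apply/andP.
Qed.
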